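(* Let $B$ be a minimum-weight basis of the weighted uncertainty matroid $\mathcal{M}=(E,\mathcal{I},A,w)$ and let $Q$ be a certificate that verifies $B$. Let $e\in B$ and $e'\notin B$ with $U_e=U_{e'}=w_e=w_{e'}$ be such that $e\in C_{e'}$, where $C_{e'}$ is the fundamental circuit of $e'$ with respect to $B$. Then $Q'=(Q\setminus\{e'\})\cup\{e\}$ is a certificate that verifies $B'=(B\setminus\{e\})\cup\{e'\}$.
   Context: A weighted uncertainty matroid $\mathcal{M}=(E,\mathcal{I},A,w)$ consists of a matroid $M=(E,\mathcal{I})$ on a finite set $E$, for each $e\in E$ a non-empty finite union $A_e$ of bounded real intervals (each open or closed), and a weight $w_e\in A_e$. Let $L_e=\inf A_e$, $U_e=\sup A_e$. A minimum-weight basis is a basis of $M$ minimizing the sum of weights. A weight assignment is $w^*:E\to\mathbb{R}$ with $w^*_e\in A_e$, consistent with $Q$ if $w^*_e=w_e$ for $e\in Q$. $Q$ verifies a basis $B$ (is a certificate for $B$) if for every weight assignment consistent with $Q$, $B$ is a minimum-weight basis with respect to it. For a basis $B$ and $f\notin B$, the fundamental circuit of $f$ is the unique circuit contained in $B\cup\{f\}$. *)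

(* Defs.v *)
From HB Require Import structures.
From mathcomp Require Import all_boot all_order all_algebra.
From mathcomp Require Import boolp reals.
From mathcomp Require classical_sets.
Set Implicit Arguments. Unset Strict Implicit. Unset Printing Implicit Defensive.
Import Order.TTheory GRing.Theory Num.Theory.
Local Open Scope ring_scope.

Record matroid (E : finType) := Matroid {
  indep : pred {set E};
  indep_set0 : indep (finset.set0 : {set E});
  indep_sub : forall I J : {set E}, J \subset I -> indep I -> indep J;
  indep_exchange : forall I J : {set E}, indep I -> indep J -> (#|I| < #|J|)%N ->
      exists2 x, x \in J :\: I & indep (x |: I)
}.

Definition is_basis (E : finType) (M : matroid E) (B : {set E}) : Prop :=
  indep M B /\ forall J : {set E}, B \proper J -> ~~ indep M J.

Definition is_circuit (E : finType) (M : matroid E) (C : {set E}) : Prop :=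
  ~~ indep M C /\ forall D : {set E}, D \proper C -> indep M D.

(* A bounded real interval (a, b, closed?): [a,b] if closed, (a,b) otherwise. *)
Definition interval_of (R : realType) := (R * R * bool)%type.

Definition in_interval (R : realType) (I : interval_of R) (x : R) : Prop :=
  let: (a, b, c) := I in if c then a <= x <= b else a < x < b.

Definition uarea (R : realType) := seq (interval_of R).

Definition in_uarea (R : realType) (A : uarea R) (x : R) : Prop :=
  exists2 I, I \in A & in_interval I x.

Definition Lbound (R : realType) (A : uarea R) : R := inf (fun x => in_uarea A x).
Definition Ubound (R : realType) (A : uarea R) : R := sup (fun x => in_uarea A x).

Record wumatroid (R : realType) (E : finType) := WUMatroid {
  wum_M : matroid E;
  wum_A : E -> uarea R;
  wum_w : E -> R;
  wum_wA : forall e, in_uarea (wum_A e) (wum_w e)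
}.

Definition weight (R : realType) (E : finType) (w : E -> R) (B : {set E}) : R :=
  \sum_(e in B) w e.

Definition is_min_basis (R : realType) (E : finType) (M : matroid E)
    (w : E -> R) (B : {set E}) : Prop :=
  is_basis M B /\ forall B', is_basis M B' -> weight w B <= weight w B'.

Definition weight_assignment (R : realType) (E : finType) (W : wumatroid R E)
    (ws : E -> R) : Prop := forall e, in_uarea (wum_A W e) (ws e).

Definition consistent (R : realType) (E : finType) (W : wumatroid R E)
    (Q : {set E}) (ws : E -> R) : Prop :=
  weight_assignment W ws /\ forall e, e \in Q -> ws e = wum_w W e.

Definition verifies (R : realType) (E : finType) (W : wumatroid R E)
    (Q B : {set E}) : Prop :=
  forall ws, consistent W Q ws -> is_min_basis (wum_M W) ws B.

Definition fundamental_circuit (E : finType) (M : matroid E) (B : {set E})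
    (f : E) (C : {set E}) : Prop :=
  is_circuit M C /\ C \subset f |: B.

(* Main.v *)
Require Import Defs.
From mathcomp Require Import all_boot all_order all_algebra.
From mathcomp Require Import boolp reals.
From mathcomp Require classical_sets.
From mathcomp Require Import zify lra.
Import Order.TTheory GRing.Theory Num.Theory.
Local Open Scope ring_scope.

Lemma uarea_le_U (R : realType) (A : uarea R) x : in_uarea A x -> x <= Ubound A.
Proof.
move=> hx; apply: (ub_le_sup _ hx); clear hx x.
exists (\sum_(I <- A) `|I.1.2|) => y [I IA hy].
have le1 : y <= I.1.2.
  move: hy; case: I {IA} => [[a b] c] /=; case: c.
    by case/andP.
  by case/andP=> _ /ltW.
apply: (le_trans le1); apply: (le_trans (ler_norm _)).
elim: A IA => [|J A IH]; first by rewrite in_nil.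
rewrite in_cons big_cons => /orP [/eqP ->|/IH h].
  by rewrite lerDl sumr_ge0.
by apply: (le_trans h); rewrite lerDr.
Qed.

Lemma augment (E : finType) (M : matroid E) (I J : {set E}) :
  indep M I -> indep M J ->
  exists I', [/\ indep M I', I \subset I', I' \subset I :|: J & (#|J| <= #|I'|)%N].
Proof.
have [n] := ubnP (#|J| - #|I|)%N; elim: n I => [//|n IH] I hn hI hJ.
case: (leqP #|J| #|I|) => hle.
  by exists I; split => //; apply: subsetUl.
have [x /setDP [xJ xI] hxI] := indep_exchange hI hJ hle.
have hn' : (#|J| - #|x |: I| < n)%N.
  rewrite cardsU1 xI /=. move: hn hle; lia.
have [I' [h1 h2 h3 h4]] := IH _ hn' hxI hJ.
exists I'; split => //.
  by apply: subset_trans h2; apply: subsetUr.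
apply: (subset_trans h3); apply/subsetP => y.
rewrite !inE => /orP [/orP [/eqP ->|->]|->] //; by rewrite ?xJ ?orbT.
Qed.

Arguments augment {E M I J}.

Theorem lemma10 (R : realType) (E : finType) (W : wumatroid R E)
    (B Q : {set E}) (e e' : E) (C : {set E}) :
  is_min_basis (wum_M W) (wum_w W) B ->
  verifies W Q B ->
  e \in B -> e' \notin B ->
  Ubound (wum_A W e) = Ubound (wum_A W e') ->
  Ubound (wum_A W e') = wum_w W e ->
  wum_w W e = wum_w W e' ->
  fundamental_circuit (wum_M W) B e' C ->
  e \in C ->
  verifies W ((Q :\ e') :|: [set e]) ((B :\ e) :|: [set e']).
Proof.
move=> [[indB maxB] _] hQ eB e'B _ hU hw [[depC minC] CB] eC.
set M := wum_M W.
set B' := (B :\ e) :|: [set e'].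
have nee : e != e' by apply: contraNneq e'B => <-.
have cardB' : #|B'| = #|B|.
  rewrite /B' setUC cardsU1 !inE negb_and e'B orbT (cardsD1 e B) eB /=.
  by rewrite add1n.
have indB' : indep M B'.
  have hC : indep M (C :\ e).
    apply: minC; rewrite properD1 //.
  have [I' [h1 h2 h3 h4]] := augment hC indB.
  have eI' : e \notin I'.
    apply/negP => eI; move/negP: depC; apply.
    apply: (indep_sub _ h1); apply/subsetP => y yC.
    case: (eqVneq y e) => [->//|ye].
    by apply: (subsetP h2); rewrite !inE ye.
  have sub : I' \subset B'.
    apply/subsetP => y yI.
    have ye : y != e by apply: contraNneq eI' => <-.
    move: (subsetP h3 y yI); rewrite !inE ye /= => /orP [yC|->//].
    by move: (subsetP CB y yC); rewrite !inE => /orP [->|->]; rewrite ?orbT.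
  have : I' == B' by rewrite eqEcard sub cardB' h4.
  by move/eqP <-.
have basB' : is_basis M B'.
  split => // J hJ; apply/negP => indJ.
  have lt : (#|B| < #|J|)%N by rewrite -cardB'; apply: proper_card.
  have [x /setDP [xJ xB] hx] := indep_exchange indB indJ lt.
  have hp : B \proper x |: B by rewrite setUC properUl // sub1set.
  by move: (maxB _ hp); rewrite hx.
move=> ws [wsA wsQ].
set u := wum_w W e.
pose ws2 := fun x => if x == e' then wum_w W e' else ws x.
have hws2 : consistent W Q ws2.
  split.
    move=> x; rewrite /ws2; case: eqP => [->|_]; [exact: wum_wA | exact: wsA].
  move=> x xQ; rewrite /ws2; case: eqP => [->//|/eqP xe'].
  by apply: wsQ; rewrite !inE xe' xQ.
have [_ minB2] := hQ _ hws2.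
have wse : ws e = u by apply: wsQ; rewrite !inE eqxx orbT.
have le_u : ws e' <= u by rewrite /u -hU; apply: uarea_le_U.
set d := u - ws e'.
have d0 : 0 <= d by rewrite subr_ge0.
have wrel : forall X, weight ws X = weight ws2 X - (e' \in X)%:R * d.
  move=> X; rewrite /weight; case: (boolP (e' \in X)) => hX.
    rewrite (bigD1 e' hX) [in RHS](bigD1 e' hX) /= /ws2 eqxx mul1r.
    have -> : \sum_(i in X | i != e') (if i == e' then wum_w W e' else ws i) = \sum_(i in X | i != e') ws i.
      by apply: eq_bigr => i; case/andP => _ ie; rewrite (negPf ie).
    rewrite /d /u hw; lra.
  rewrite mul0r subr0; apply: eq_bigr => i iX.
  by rewrite /ws2; case: eqP => // ie; rewrite -ie iX in hX.
have wB' : weight ws2 B' = weight ws2 B.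
  rewrite /weight /B' setUC.
  rewrite big_setU1 /=; last by rewrite !inE negb_and e'B orbT.
  rewrite (big_setD1 e eB) /= /ws2 eqxx (negPf nee) wse -hw [RHS]addrC.
  by rewrite addrC.
split => // B'' hB''.
rewrite !wrel /B' !inE eqxx orbT mul1r.
have := minB2 _ hB''; rewrite -wB'.
case: (e' \in B''); rewrite ?mul1r ?mul0r; lra.
Qed.
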